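(* Let $G$ be an ordered graph and let $v$ be a leaf of $G$ (a vertex of degree exactly $1$). Then for every $n\ge 1$, $$r_o(G,K_n)\;\le\;\binom{n}{2}+n\cdot r_o(G-v,K_n),$$ where $G-v$ is the ordered graph obtained from $G$ by deleting $v$ and keeping the induced order on the remaining vertices.
   Context: An ordered graph $G$ on $n$ vertices has vertex set $[n]=\{1,\dots,n\}$ with the natural linear order (a graph on any finite linearly ordered set is identified with one on $[n]$ via the order-preserving bijection). An ordered graph $G$ on $[n]$ is contained in an ordered graph $H$ on a linearly ordered vertex set if there is an injective map $f$ from $[n]$ to $V(H)$ with $f(i)<f(j)$ whenever $i<j$ and $f(i)f(j)\in E(H)$ whenever $ij\in E(G)$; such an image is an ordered copy of $G$. $K_n$ denotes the complete graph on $[n]$. The online ordered Ramsey game for $(G_1,G_2)$ is played by Builder and Painter on the vertex set $\mathbb N$ with its natural order. On each turn Builder selects a previously unselected pair of vertices (an edge) and Painter then colors it red or blue. Builder wins as soon as the colored edges contain an ordered red copy of $G_1$ or an ordered blue copy of $G_2$; Builder tries to minimize and Painter tries to maximize the number of turns. The online ordered Ramsey number $r_o(G_1,G_2)$ is the number of turns after which Builder wins when both players play optimally. *)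

(* Defs.v *)
From mathcomp Require Import all_boot.
From Stdlib Require Import ClassicalEpsilon.
Set Implicit Arguments. Unset Strict Implicit. Unset Printing Implicit Defensive.

(* An ordered graph on vertex set {0, ..., overt - 1} (natural order);
   only the values of [oedge] on pairs of vertices < overt matter. *)
Record ograph := OGraph { overt : nat; oedge : rel nat }.

Definition Kn (n : nat) : ograph := OGraph n (fun i j => i != j).

Definition odeg (G : ograph) (v : nat) : nat := count (oedge G v) (iota 0 (overt G)).

Definition is_leaf (G : ograph) (v : nat) : Prop := v < overt G /\ odeg G v = 1.

Definition odelete (G : ograph) (v : nat) : ograph :=
  OGraph (overt G).-1 (fun i j => oedge G (bump v i) (bump v j)).

(* A position of the game: list of coloured edges ((x,y), c) with x < y;
   c = true means red, c = false means blue. *)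
Definition position := seq ((nat * nat) * bool).

Definition has_col (s : position) (c : bool) (x y : nat) : bool :=
  ((minn x y, maxn x y), c) \in s.

Definition contains_copy (G : ograph) (s : position) (c : bool) : Prop :=
  exists f : nat -> nat,
    (forall i j, i < j -> j < overt G -> f i < f j) /\
    (forall i j, i < overt G -> j < overt G -> oedge G i j -> has_col s c (f i) (f j)).

Definition builder_won (G1 G2 : ograph) (s : position) : Prop :=
  contains_copy G1 s true \/ contains_copy G2 s false.

Definition uncoloured (s : position) (x y : nat) : bool :=
  ~~ has (fun p => p.1 == (x, y)) s.

Fixpoint builder_wins_within (G1 G2 : ograph) (k : nat) (s : position) : Prop :=
  match k with
  | 0 => builder_won G1 G2 s
  | k'.+1 => builder_won G1 G2 s \/
      exists x y, x < y /\ uncoloured s x y /\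
        forall c : bool, builder_wins_within G1 G2 k' (((x, y), c) :: s)
  end.

Definition wins_pred (G1 G2 : ograph) : pred nat :=
  fun k => if excluded_middle_informative (builder_wins_within G1 G2 k [::])
           then true else false.

(* online ordered Ramsey number: least k such that Builder wins within k turns
   from the empty board (0 if no such k exists, which never happens). *)
Definition ro (G1 G2 : ograph) : nat :=
  match excluded_middle_informative (exists k, wins_pred G1 G2 k) with
  | left H => ex_minn H
  | right _ => 0
  end.

(* Main.v *)
Require Import Defs.
From mathcomp Require Import all_boot.
From mathcomp Require Import zify.
From Stdlib Require Import ClassicalEpsilon.
Set Implicit Arguments. Unset Strict Implicit. Unset Printing Implicit Defensive.

Fixpoint reach (P : position -> Prop) (k : nat) (s : position) : Prop :=
  match k with
  | 0 => P s
  | k'.+1 => P s \/ exists x y, x < y /\ uncoloured s x y /\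
        forall c : bool, reach P k' (((x, y), c) :: s)
  end.

Lemma bww_reach G1 G2 k s :
  builder_wins_within G1 G2 k s <-> reach (builder_won G1 G2) k s.
Proof.
elim: k s => [|k IH] s //=.
split; case=> [h|[x [y [h1 [h2 h3]]]]]; try by left.
- right; exists x, y; do 2 split => //; move=> c; exact/IH.
- right; exists x, y; do 2 split => //; move=> c; exact/IH.
Qed.

Lemma reach_P P k s : P s -> reach P k s.
Proof. by case: k => [|k] /=; [|left]. Qed.

Lemma reach_monoP (P Q : position -> Prop) k s :
  (forall s, P s -> Q s) -> reach P k s -> reach Q k s.
Proof.
move=> PQ; elim: k s => [|k IH] s /=; first exact: PQ.
case=> [h|[x [y [h1 [h2 h3]]]]]; first by left; apply: PQ.
right; exists x, y; do 2 split => //; move=> c; exact/IH.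
Qed.

Lemma reach_monok P k k' s : k <= k' -> reach P k s -> reach P k' s.
Proof.
elim: k k' s => [|k IH] [|k'] s //= hk.
- by move=> h; left.
- case=> [h|[x [y [h1 [h2 h3]]]]]; first by left.
  right; exists x, y; do 2 split => //; move=> c; exact: IH (h3 c).
Qed.

Lemma reach_bind (P Q : position -> Prop) a b s :
  reach P a s -> (forall s', P s' -> reach Q b s') -> reach Q (a + b) s.
Proof.
move=> + PQ; elim: a s => [|a IH] s /=; first exact: PQ.
case=> [h|[x [y [h1 [h2 h3]]]]].
- have hb := PQ _ h; apply: (@reach_monok Q b (a+b).+1) => //; lia.
- right; exists x, y; do 2 split => //; move=> c; exact: IH.
Qed.

Lemma has_colC s c a b : has_col s c a b = has_col s c b a.
Proof. by rewrite /has_col minnC maxnC. Qed.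

Lemma has_col_sub s s' c a b : {subset s <= s'} -> has_col s c a b -> has_col s' c a b.
Proof. by move=> sub; apply: sub. Qed.

Definition bcopy (F : ograph) (t : position) (c : bool) (M : nat) : Prop :=
  exists f : nat -> nat,
    (forall i j, i < j -> j < overt F -> f i < f j) /\
    (forall i j, i < overt F -> j < overt F -> oedge F i j -> has_col t c (f i) (f j)) /\
    (forall i, i < overt F -> f i < M).

Lemma bcopy_mono F t c M M' : M <= M' -> bcopy F t c M -> bcopy F t c M'.
Proof.
move=> hM [f [h1 [h2 h3]]]; exists f; do 2 split => //.
move=> i hi; exact: leq_trans (h3 i hi) hM.
Qed.

Lemma fin_bound (g : nat -> nat) N : exists M, forall i, i < N -> g i < M.
Proof.
elim: N => [|N [M hM]]; first by exists 0.
exists (maxn M (g N).+1) => i; rewrite ltnS leq_eqVlt => /orP [/eqP ->|hi].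
- by rewrite leq_max leqnn orbT.
- by rewrite leq_max (hM i hi).
Qed.

Lemma copy_bounded F t c : contains_copy F t c -> exists M, bcopy F t c M.
Proof.
move=> [f [h1 h2]]; have [M hM] := fin_bound f (overt F).
by exists M, f.
Qed.

Section Bounded.
Variables (H : ograph) (n : nat).

Definition wonb M t := bcopy H t true M \/ bcopy (Kn n) t false M.

Fixpoint bw (M k : nat) (t : position) : Prop :=
  match k with
  | 0 => wonb M t
  | k'.+1 => wonb M t \/ exists x y, x < y /\ y < M /\ uncoloured t x y /\
        forall c : bool, bw M k' (((x, y), c) :: t)
  end.

Lemma wonb_mono M M' t : M <= M' -> wonb M t -> wonb M' t.
Proof. by move=> hM [h|h]; [left|right]; apply: bcopy_mono hM h. Qed.

Lemma bw_mono M M' k t : M <= M' -> bw M k t -> bw M' k t.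
Proof.
move=> hM; elim: k t => [|k IH] t /=; first exact: wonb_mono.
case=> [h|[x [y [h1 [h2 [h3 h4]]]]]]; first by left; apply: wonb_mono h.
right; exists x, y; split=> //; split; first exact: leq_trans h2 hM.
by split=> // c; apply: IH.
Qed.

Lemma bww_bounded k t : builder_wins_within H (Kn n) k t -> exists M, bw M k t.
Proof.
elim: k t => [|k IH] t /=.
  case=> /copy_bounded [M hM]; exists M; by [left|right].
case=> [[]/copy_bounded [M hM]|[x [y [h1 [h2 h3]]]]].
- by exists M; left; left.
- by exists M; left; right.
have [M1 hM1] := IH _ (h3 true); have [M2 hM2] := IH _ (h3 false).
exists (maxn y.+1 (maxn M1 M2)); right; exists x, y; split=> //.
split; first by rewrite leq_max leqnn.
split=> // -[]; [apply: (bw_mono _ hM1)|apply: (bw_mono _ hM2)]; lia.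
Qed.

End Bounded.

Section Transport.
Variables (L K0 : nat) (s0 : position).
Hypothesis K0pos : 0 < K0.

Definition phi p := L + K0 * p.+1.
Definition Phi (e : (nat * nat) * bool) := ((phi e.1.1, phi e.1.2), e.2).

Lemma phi_lt a b : (phi a < phi b) = (a < b).
Proof. by rewrite /phi ltn_add2l ltn_pmul2l. Qed.
Lemma phi_le a b : (phi a <= phi b) = (a <= b).
Proof. by rewrite /phi leq_add2l leq_pmul2l. Qed.
Lemma phi_eq a b : (phi a == phi b) = (a == b).
Proof. by rewrite /phi eqn_add2l eqn_pmul2l. Qed.
Lemma phi_min a b : minn (phi a) (phi b) = phi (minn a b).
Proof. by rewrite /minn phi_lt; case: ifP. Qed.
Lemma phi_max a b : maxn (phi a) (phi b) = phi (maxn a b).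
Proof. by rewrite /maxn phi_lt; case: ifP. Qed.

Lemma has_col_phi t c a b : has_col t c a b -> has_col (map Phi t ++ s0) c (phi a) (phi b).
Proof.
rewrite /has_col mem_cat => h; apply/orP; left.
by rewrite phi_min phi_max; apply: (map_f Phi h).
Qed.

Lemma Phi_ends e : e \in map Phi [::] -> False.
Proof. by []. Qed.

Lemma map_Phi_ends t e : e \in map Phi t -> exists a b, e.1.1 = phi a /\ e.1.2 = phi b.
Proof. by case/mapP=> e0 _ ->; exists e0.1.1, e0.1.2. Qed.

Variables (H : ograph) (n : nat).

Lemma transport M k t :
  (forall a b, a < b -> b < M -> uncoloured s0 (phi a) (phi b)) ->
  (forall e, e \in t -> e.1.1 < M /\ e.1.2 < M) ->
  bw H n M k t ->
  reach (fun s' => exists t', s' = map Phi t' ++ s0 /\ wonb H n M t' /\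
     (forall e, e \in t' -> e.1.1 < M /\ e.1.2 < M)) k (map Phi t ++ s0).
Proof.
move=> hun; elim: k t => [|k IH] t ht /=; first by move=> h; exists t.
case=> [h|[x [y [h1 [h2 [h3 h4]]]]]]; first by left; exists t.
right; exists (phi x), (phi y); split; first by rewrite phi_lt.
split; last first.
  move=> c; apply: (IH (((x, y), c) :: t)) => // e; rewrite in_cons => /orP [/eqP -> /=|/ht //].
  split=> //; exact: ltn_trans h1 h2.
have := hun _ _ h1 h2; rewrite /uncoloured has_cat negb_or => ->; rewrite andbT has_map.
move: h3; rewrite /uncoloured; apply: contra => /hasP [e he /eqP he2].
apply/hasP; exists e => //=; move: he2; rewrite /Phi /= => -[/eqP + /eqP].
by rewrite !phi_eq => /eqP e1 /eqP e2; rewrite -e1 -e2 -surjective_pairing.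
Qed.

End Transport.

Lemma bump_lt v i j : (bump v i < bump v j) = (i < j).
Proof. rewrite /bump; case: (leqP v i); case: (leqP v j); lia. Qed.

Lemma won_delete G n v s : v < overt G ->
  builder_won G (Kn n) s -> builder_won (odelete G v) (Kn n) s.
Proof.
move=> vN [[f [h1 h2]]|h]; last by right.
left; exists (fun i => f (bump v i)); split => /= [i j ij jN|i j iN jN e].
- apply: h1; first by rewrite bump_lt.
  move: jN; rewrite /bump; case: (leqP v j); lia.
- apply: h2 => //; move: iN jN; rewrite /bump; case: (leqP v i); case: (leqP v j); lia.
Qed.

Lemma bww_delete G n v k s : v < overt G ->
  builder_wins_within G (Kn n) k s -> builder_wins_within (odelete G v) (Kn n) k s.
Proof.
move=> vN /bww_reach h; apply/bww_reach; apply: reach_monoP h.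
by move=> s'; apply: won_delete.
Qed.

Definition inI L Z a := (L <= a) && (a < L + Z).

Lemma a1 L K0 c p : c <= p -> L + K0 * c + K0 <= L + K0 * p.+1.
Proof. move=> h; have := leq_mul (leqnn K0) h; lia. Qed.
Lemma a2 L K0 c p : p.+1 <= c -> L + K0 * p.+1 <= L + K0 * c.
Proof. move=> h; have := leq_mul (leqnn K0) h; lia. Qed.
Lemma a3 L K0 c M Z : c <= M -> K0 * M.+1 <= Z -> L + K0 * c + K0 <= L + Z.
Proof. move=> h; have := leq_mul (leqnn K0) h; lia. Qed.

Section Main.
Variables (G : ograph) (v n u M m : nat).
Hypothesis Gsym : forall i j, oedge G i j = oedge G j i.
Hypothesis Girr : forall i, ~~ oedge G i i.
Hypothesis vN : v < overt G.
Hypothesis uN : u < overt G.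
Hypothesis Hvu : oedge G v u.
Hypothesis Huniq : forall j, j < overt G -> oedge G v j -> j = u.

Let G' := odelete G v.
Let u' := unbump v u.

Lemma uv : u != v.
Proof. by apply/eqP => e; move: (Girr v); rewrite -{2}e Hvu. Qed.

Lemma bump_u' : bump v u' = u.
Proof. by rewrite /u' unbumpKcond (negbTE uv). Qed.

Lemma u'N : u' < (overt G).-1.
Proof. have := uv; move: uN vN; rewrite /u' /unbump; case: (ltnP v u) => /=; lia. Qed.

Lemma extend s h w :
  (forall i j, i < j -> j < (overt G).-1 -> h i < h j) ->
  (forall i j, i < (overt G).-1 -> j < (overt G).-1 -> oedge G' i j -> has_col s true (h i) (h j)) ->
  (forall i, i < (overt G).-1 -> i < v -> h i < w) ->
  (forall i, i < (overt G).-1 -> v <= i -> w < h i) ->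
  has_col s true w (h u') -> contains_copy G s true.
Proof.
move=> hmono hedge hlo hhi hred.
exists (fun i => if i == v then w else h (unbump v i)); split.
- move=> i j ij jN /=.
  case: (eqVneq i v) => [ei|iv]; case: (eqVneq j v) => [ej|jv].
  + by move: ij; rewrite ej ei ltnn.
  + apply: hhi; move: ij jN jv; rewrite ei /unbump; case: (ltnP v j) => /=; lia.
  + apply: hlo; move: ij jN; rewrite ej /unbump; case: (ltnP v i) => /=; lia.
  + apply: hmono; move: ij jN iv jv; rewrite /unbump; case: (ltnP v j); case: (ltnP v i) => /=; lia.
- move=> i j iN jN e.
  case: (eqVneq i v) => [ei|iv]; case: (eqVneq j v) => [ej|jv].
  + by move: e; rewrite ei ej (negbTE (Girr v)).
  + have ju : j = u by apply: Huniq => //; rewrite -ei.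
    by rewrite ju.
  + have iu : i = u by apply: Huniq => //; rewrite -ej Gsym.
    by rewrite iu has_colC.
  + apply: hedge.
    * move: iN iv; rewrite /unbump; case: (ltnP v i) => /=; lia.
    * move: jN jv; rewrite /unbump; case: (ltnP v j) => /=; lia.
    * by rewrite /G' /odelete /= !unbumpKcond (negbTE iv) (negbTE jv).
Qed.


Lemma ek_inj x y y' : x != y -> x != y' ->
  (minn x y, maxn x y) = (minn x y', maxn x y') -> y = y'.
Proof. move=> /eqP h1 /eqP h2 [e1 e2]; lia. Qed.

Definition P2 x (s' : position) (ys : seq nat) (s'' : position) :=
  builder_won G (Kn n) s'' \/ ({subset s' <= s''} /\
    (forall y, y \in ys -> has_col s'' false x y) /\
    (forall e, e \in s'' -> e \in s' \/ exists2 y, y \in ys & e = ((minn x y, maxn x y), false))).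

Lemma edges x ys s' :
  (forall y, y \in ys -> x != y) -> uniq ys ->
  (forall y, y \in ys -> uncoloured s' (minn x y) (maxn x y)) ->
  (forall y s'', y \in ys -> {subset s' <= s''} -> has_col s'' true x y -> builder_won G (Kn n) s'') ->
  reach (P2 x s' ys) (size ys) s'.
Proof.
elim: ys s' => [|y ys IH] s' hne hu hunc hred /=.
  by right; split=> //; split=> // e he; left.
have hy := mem_head y ys.
right; exists (minn x y), (maxn x y); split.
  by have /eqP := hne y hy; lia.
split; first exact: hunc y hy.
case.
- apply: reach_P; left; apply: (hred y) => //.
  + by move=> e he; rewrite in_cons he orbT.
  + by rewrite /has_col mem_head.
- move: hu; rewrite cons_uniq => /andP [yn hu].
  set s1 := (((minn x y, maxn x y), false) :: s').
  have sub1 : {subset s' <= s1} by move=> e he; rewrite in_cons he orbT.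
  have H1 : reach (P2 x s1 ys) (size ys) s1.
    apply: IH => //.
    - by move=> y' hy'; apply: hne; rewrite in_cons hy' orbT.
    - move=> y' hy'; rewrite /uncoloured /= negb_or; apply/andP; split.
        apply/negP => /eqP e.
        have hy'2 : y' \in y :: ys by rewrite in_cons hy' orbT.
        have eyy := ek_inj (hne y hy) (hne y' hy'2) e.
        by move: yn; rewrite eyy hy'.
      by apply: hunc; rewrite in_cons hy' orbT.
    - move=> y' s'' hy' sub; apply: hred; first by rewrite in_cons hy' orbT.
      by move=> e he; apply/sub/sub1.
  apply: reach_monoP H1 => s'' [hw|[sub [hb he]]]; first by left.
  right; split; first by move=> e he'; apply/sub/sub1.
  split.
    move=> y'; rewrite in_cons => /orP [/eqP ->|hy']; last exact: hb.
    by apply: sub; apply: mem_head.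
  move=> e /he [|[y' hy' ->]].
    rewrite in_cons => /orP [/eqP ->|]; last by left.
    by right; exists y => //.
  by right; exists y' => //; rewrite in_cons hy' orbT.
Qed.


Lemma final_blue s xs : size xs = n -> uniq xs ->
  (forall a b, a \in xs -> b \in xs -> a != b -> has_col s false a b) ->
  contains_copy (Kn n) s false.
Proof.
move=> hs hu hb.
have ssx : size (sort leq xs) = n by rewrite size_sort.
have usx : uniq (sort leq xs) by rewrite sort_uniq.
have ltsx : sorted ltn (sort leq xs).
  rewrite ltn_sorted_uniq_leq usx /=; exact: (sort_sorted leq_total).
exists (fun i => nth 0 (sort leq xs) i); split => /= [i j ij jn|i j iN jN ij].
- apply: (sorted_ltn_nth ltn_trans 0 ltsx) => //; rewrite inE ssx //.
  exact: ltn_trans ij jn.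
- apply: hb.
  + by rewrite -(mem_sort leq); apply: mem_nth; rewrite ssx.
  + by rewrite -(mem_sort leq); apply: mem_nth; rewrite ssx.
  + by rewrite nth_uniq ?ssx.
Qed.


Fixpoint Zr r := match r with 0 => 0 | r'.+1 => (Zr r').+1 * M.+1 end.
Fixpoint budget r k := match r with 0 => 0 | r'.+1 => m + (k + budget r' k.+1) end.

Record Inv (k : nat) (s : position) (L Z : nat) (xs : seq nat) : Prop := {
  inv_size : size xs = k;
  inv_uniq : uniq xs;
  inv_blue : forall a b, a \in xs -> b \in xs -> a != b -> has_col s false a b;
  inv_out : forall y, y \in xs -> ~~ inI L Z y;
  inv_red : forall y w s', y \in xs -> inI L Z w -> {subset s <= s'} ->
     has_col s' true w y -> contains_copy G s' true;
  inv_fresh : forall e, e \in s -> ~~ inI L Z e.1.1 /\ ~~ inI L Z e.1.2;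
  inv_Z : Zr (n - k) <= Z }.

Hypothesis WinM : bw G' n M m [::].

Lemma round r : forall k s L Z xs, k + r = n -> Inv k s L Z xs ->
  reach (builder_won G (Kn n)) (budget r k) s.
Proof.
elim: r => [|r IH] k s L Z xs hkr hinv.
  rewrite addn0 in hkr; subst k; rewrite /=; right.
  apply: (final_blue (xs:=xs)); [exact: inv_size hinv|exact: inv_uniq hinv|exact: inv_blue hinv].
set K0 := (Zr r).+1.
have K0pos : 0 < K0 by [].
have hZ : K0 * M.+1 <= Z.
  have := inv_Z hinv; have -> : n - k = r.+1 by lia.
  by rewrite /= mulnC.
have phiI : forall p, p < M -> inI L Z (phi L K0 p).
  move=> p hp; have h1 := leq_mul (leqnn K0) hp; move: hZ; rewrite /inI /phi mulnS; lia.
have fresh1 : forall a b, inI L Z a -> uncoloured s a b.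
  move=> a b ha; apply/hasPn => e he; apply/negP => /eqP hee.
  by have [h1 _] := inv_fresh hinv he; move: h1; rewrite hee /= ha.
have fresh2 : forall a b, inI L Z b -> uncoloured s a b.
  move=> a b hb; apply/hasPn => e he; apply/negP => /eqP hee.
  by have [_ h1] := inv_fresh hinv he; move: h1; rewrite hee /= hb.
rewrite /=.
apply: (reach_bind (transport (L:=L) (s0:=s) K0pos (H:=G') (n:=n) (M:=M) (t:=[::]) _ _ WinM)).
- move=> a b ab bM; apply: fresh1; apply: phiI; exact: ltn_trans ab bM.
- by [].
move=> s0' [t' [-> [[[f [fm [fe fb]]]|[f [fm [fe _]]]] tb]]]; last first.
  apply: reach_P; right; exists (fun i => phi L K0 (f i)); split => /= [i j ij jn|i j iN jN e].
  - by rewrite phi_lt //; apply: fm.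
  - exact: has_col_phi (fe i j iN jN e).
set x := phi L K0 (f u').
have xI : inI L Z x := phiI _ (fb _ u'N).
set s' := map (Phi L K0) t' ++ s.
have sub0 : {subset s <= s'} by move=> e he; rewrite mem_cat he orbT.
have hedges : reach (P2 x s' xs) k s'.
  rewrite -(inv_size hinv); apply: (@edges x xs s' _ (inv_uniq hinv)).
  - move=> y hy; apply/eqP => exy; have := inv_out hinv hy; by rewrite -exy xI.
  - move=> y hy.
    have us : uncoloured s (minn x y) (maxn x y).
      by rewrite /minn /maxn; case: ifP => _; [apply: fresh1|apply: fresh2].
    move: us; rewrite /uncoloured has_cat negb_or => ->; rewrite andbT.
    apply/hasPn => e /mapP [e0 he0 ->] /=; apply/negP => /eqP [e1 e2].
    have [b1 b2] := tb _ he0.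
    have := inv_out hinv hy; apply/negP; rewrite negbK.
    move: e1 e2; rewrite /minn /maxn; case: ifP => _ e1 e2.
      by rewrite -e2; apply: phiI.
    by rewrite -e1; apply: phiI.
  - move=> y s'' hy sub hr; left; apply: (inv_red hinv hy xI _ hr).
    by move=> e he; apply/sub/sub0.
apply: (reach_bind hedges).
move=> s'' [hw|[sub [hb hent]]]; first by apply: reach_P.
have N2 : 0 < (overt G).-1 by have /eqP := uv; move: uN vN; lia.
have [c [hcM [hc1 hc2]]] : exists c, c <= M /\
    (forall i, i < (overt G).-1 -> i < v -> (f i).+1 <= c) /\
    (forall i, i < (overt G).-1 -> v <= i -> c <= f i).
  case hv: v => [|v'].
    exists (f 0); split; first exact: ltnW (fb _ N2).
    split => // i iN _; case: i iN => [|i] iN //; apply: ltnW; exact: fm.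
  have v'N : v' < (overt G).-1 by move: vN; rewrite hv; lia.
  exists (f v').+1; split; first exact: fb.
  split => i iN hi.
    rewrite ltnS; move: hi; rewrite ltnS leq_eqVlt => /orP [/eqP ->//|hi].
    by apply: ltnW; apply: fm.
  exact: fm.
set lo := L + K0 * c.
have F1 : forall i, i < (overt G).-1 -> i < v -> phi L K0 (f i) <= lo.
  move=> i iN hi; exact: a2 (hc1 i iN hi).
have F2 : forall i, i < (overt G).-1 -> v <= i -> lo + K0 <= phi L K0 (f i).
  move=> i iN hi; exact: a1 (hc2 i iN hi).
have F4 : forall p, ~~ inI lo.+1 (Zr r) (phi L K0 p).
  move=> p; rewrite /inI negb_and -!ltnNge; case: (leqP c p) => hp.
    by have := a1 L K0 hp; rewrite -/lo /phi /K0; lia.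
  by have := a2 L K0 hp; rewrite -/lo /phi; lia.
have gapI : forall w, inI lo.+1 (Zr r) w -> inI L Z w.
  move=> w; have := a3 L hcM hZ; rewrite -/lo /inI /K0; lia.
have ngap : forall y, ~~ inI L Z y -> ~~ inI lo.+1 (Zr r) y.
  by move=> y hy; apply/negP => /gapI; apply/negP.
apply: (IH k.+1 s'' lo.+1 (Zr r) (x :: xs)); first lia.
constructor.
- by rewrite /= (inv_size hinv).
- rewrite /= (inv_uniq hinv) andbT; apply/negP => hx.
  by have := inv_out hinv hx; rewrite xI.
- move=> a b; rewrite !in_cons => /orP[/eqP->|ha] /orP[/eqP->|hb'] neq.
  + by rewrite eqxx in neq.
  + exact: hb.
  + rewrite has_colC; exact: hb.
  + apply: (has_col_sub sub); apply: (has_col_sub sub0). have hh := inv_blue hinv ha hb' neq. exact hh.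
- move=> y; rewrite in_cons => /orP[/eqP->|hy]; first exact: F4.
  apply: ngap; exact (inv_out hinv hy).
- move=> y w s3 hy hw sub3 hr; move: hy; rewrite in_cons => /orP[/eqP ey|hy]; last first.
    apply: (inv_red hinv hy (gapI _ hw) _ hr).
    by move=> e he; apply/sub3/sub/sub0.
  subst y.
  apply: (@extend s3 (fun i => phi L K0 (f i)) w).
  + by move=> i j ij jN; rewrite phi_lt //; apply: fm.
  + move=> i j iN jN e; apply: (has_col_sub sub3); apply: (has_col_sub sub).
    exact: has_col_phi (fe i j iN jN e).
  + move=> i iN hi; have := F1 i iN hi; move: hw; rewrite /inI; lia.
  + move=> i iN hi; have := F2 i iN hi; move: hw; rewrite /inI /K0; lia.
  + exact: hr.
- move=> e /hent [|[y hy ->]].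
    rewrite mem_cat => /orP[/mapP [e0 _ ->]|hs]; first by split; apply: F4.
    by have [h1 h2] := inv_fresh hinv hs; split; apply: ngap.
  have nx : ~~ inI lo.+1 (Zr r) x := F4 _.
  have ny : ~~ inI lo.+1 (Zr r) y by apply: ngap; exact (inv_out hinv hy).
  by rewrite /= /minn /maxn; split; case: ifP.
- by have -> : n - k.+1 = r by lia.
Qed.

End Main.

Lemma wins_predP G1 G2 k : wins_pred G1 G2 k <-> builder_wins_within G1 G2 k [::].
Proof. by rewrite /wins_pred; case: excluded_middle_informative. Qed.

Lemma budgetE m r k : budget m r k = r * m + r * k + 'C(r, 2).
Proof.
elim: r k => [|r IH] k //=; rewrite IH binS bin1; lia.
Qed.

Lemma leaf_nbr G v : (forall i, ~~ oedge G i i) -> is_leaf G v ->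
  exists u, [/\ u < overt G, oedge G v u & forall j, j < overt G -> oedge G v j -> j = u].
Proof.
move=> Girr [vN hd]; rewrite /odeg in hd.
have : has (oedge G v) (iota 0 (overt G)) by rewrite has_count hd.
case/hasP => u hu hvu; exists u; split => //.
  by move: hu; rewrite mem_iota.
move=> j jN hvj; case: (eqVneq j u) => // nju; exfalso.
have hp := perm_to_rem hu; move: hd; rewrite ((permP hp) (oedge G v)) /= hvu.
have : j \in rem u (iota 0 (overt G)).
  rewrite mem_rem_uniq ?iota_uniq // inE /= nju mem_iota /=; lia.
move=> hj; have : 0 < count (oedge G v) (rem u (iota 0 (overt G))).
  by rewrite -has_count; apply/hasP; exists j.
lia.
Qed.

Theorem lemma8 (G : ograph) (v n : nat) :
  (forall i j, oedge G i j = oedge G j i) ->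
  (forall i, ~~ oedge G i i) ->
  is_leaf G v ->
  1 <= n ->
  ro G (Kn n) <= 'C(n, 2) + n * ro (odelete G v) (Kn n).
Proof.
move=> Gsym Girr hleaf n1.
have [u [uN Hvu Huniq]] := leaf_nbr Girr hleaf.
have vN : v < overt G by case: hleaf.
rewrite {2}/ro; case: excluded_middle_informative => [HG'|HG']; last first.
  rewrite /ro; case: excluded_middle_informative => [[k hk]|_] //.
  exfalso; apply: HG'; exists k; apply/wins_predP.
  by apply: bww_delete => //; apply/wins_predP.
case: ex_minnP => m /wins_predP hm _.
have [M hM] := bww_bounded hm.
have hinv : Inv G n M 0 [::] 0 (Zr M n) [::].
  by constructor => //; rewrite subn0.
have := round Gsym Girr vN uN Hvu Huniq hM (r:=n) (add0n n) hinv.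
move=> /bww_reach hB.
rewrite /ro; case: excluded_middle_informative => [H|H]; last first.
  by exfalso; apply: H; exists (budget m n 0); apply/wins_predP.
case: ex_minnP => k _ hmin.
have := hmin _ (proj2 (wins_predP _ _ _) hB); rewrite budgetE; lia.
Qed.
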